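(* Let $\varphi\in\mathrm{THT}_1(\mathsf X,\mathsf G)$ and let $M$ be an equilibrium model of $\varphi$. Then every witness extraction of $M$ for $\varphi$ is also an equilibrium model of $\varphi$.
   Context: Fix a finite set $P$ of atomic propositions. THT formulas over $P$: $\varphi ::= p \mid \bot \mid \varphi\vee\varphi \mid \varphi\wedge\varphi \mid \varphi\rightarrow\varphi \mid \mathsf{X}\varphi \mid \varphi\,\mathsf{U}\,\varphi \mid \varphi\,\mathsf{R}\,\varphi$, with $\neg\varphi:=\varphi\rightarrow\bot$, $\top:=\neg\bot$, $\mathsf F\varphi:=\top\mathsf U\varphi$, $\mathsf G\varphi:=\bot\mathsf R\varphi$. A THT interpretation is a pair $M=(H,T)$ of infinite words over $2^P$ with $H(i)\subseteq T(i)$ for all $i$. Write $M(i)=(H(i),T(i))$; $M$ is total if $H=T$. Satisfaction $M,i\models\varphi$ is defined by: - $M,i\not\models\bot$; - $M,i\models p$ iff $p\in H(i)$; - $\vee$ and $\wedge$ are interpreted as usual; - $M,i\models\varphi\rightarrow\psi$ iff for both $H'\in\{H,T\}$, either $(H',T),i\not\models\varphi$ or $(H',T),i\models\psi$; - $M,i\models\mathsf X\varphi$ iff $M,i+1\models\varphi$; - $\mathsf U$ and $\mathsf R$ have the usual LTL clauses evaluated in $M$ (so $M,i\models\mathsf G\varphi$ iff $M,j\models\varphi$ for all $j\ge i$). $M\models\varphi$ means $M,0\models\varphi$. An equilibrium model of $\varphi$ is a total $(T,T)\models\varphi$ with $(H,T)\not\models\varphi$ whenever $H(i)\subseteq T(i)$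 for all $i$ and $H\ne T$. $\mathrm{THT}_1(\mathsf X,\mathsf G)$ is the set of formulas whose only temporal modalities are $\mathsf X$ and $\mathsf G$, with no temporal modality nested inside another. Witness pattern. A witness pattern of $M=(H,T)$ for $\varphi$ is a strictly increasing sequence $n_0<n_1<\cdots$ such that, for some $k\ge0$, $M(n_i)=M(n_{k+1})$ for all $i\ge k+1$, and $W=\{n_0,\dots,n_k\}$ is minimal with respect to the following conditions: - $0\in W$, and $1\in W$ if $\varphi$ has a subformula $\mathsf X\psi$; - if $M$ is not total, some $i$ with $H(i)\subsetneq T(i)$ is in $W$; - for each subformula $\varphi_1\mathsf U\varphi_2$: if $M\models\varphi_1\mathsf U\varphi_2$, the least $i$ with $M,i\models\varphi_2$ is in $W$; if $M\not\models\varphi_1\mathsf U\varphi_2$ and $M\models\mathsf F\varphi_2$, the least $i$ with $M,i\not\models\varphi_1$ is in $W$; - for each subformula $\varphi_1\mathsf R\varphi_2$ (in particular each $\mathsf G\psi=\bot\mathsf R\psi$): if $M\not\models\varphi_1\mathsf R\varphi_2$, the least $i$ with $M,i\not\models\varphi_2$ is in $W$; if $M\models\varphi_1\mathsf R\varphi_2$ and $M\not\models\mathsf G\varphi_2$, the least $i$ with $M,i\models\varphi_1\wedge\varphi_2$ is in $W$. A witness extraction of $M$ for $\varphi$ is an interpretation $M(n_0),M(n_1),\dots$ where $n_0<n_1<\cdots$ is a witness pattern of $M$ for $\varphi$. *)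

(* Defs.v *)
From mathcomp Require Import all_boot.
Set Implicit Arguments. Unset Strict Implicit. Unset Printing Implicit Defensive.

Section THT.
Variable P : finType.

Inductive formula : Type :=
| FVar of P
| FBot
| FOr of formula & formula
| FAnd of formula & formula
| FImp of formula & formula
| FNext of formula
| FUntil of formula & formula
| FRelease of formula & formula.

Definition FNeg (f : formula) := FImp f FBot.
Definition FTop := FNeg FBot.
Definition FEv (f : formula) := FUntil FTop f.
Definition FAlw (f : formula) := FRelease FBot f.

Definition word := nat -> {set P}.

(** Satisfaction (H,T), i |= f.  The interpretation (H,T) is assumed to
    satisfy H i \subset T i where relevant. *)
Fixpoint sat (H T : word) (i : nat) (f : formula) : Prop :=
  match f with
  | FVar p => p \in H i
  | FBot => False
  | FOr a b => sat H T i a \/ sat H T i b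
  | FAnd a b => sat H T i a /\ sat H T i b
  | FImp a b => (~ sat H T i a \/ sat H T i b) /\ (~ sat T T i a \/ sat T T i b)
  | FNext a => sat H T i.+1 a
  | FUntil a b => exists j, i <= j /\ sat H T j b /\
                   (forall k, i <= k -> k < j -> sat H T k a)
  | FRelease a b => forall j, i <= j -> sat H T j b \/
                   (exists k, [/\ i <= k, k < j & sat H T k a])
  end.

Definition equilibrium (f : formula) (T : word) : Prop :=
  sat T T 0 f /\
  (forall H : word, (forall i, H i \subset T i) -> H <> T -> ~ sat H T 0 f).

Fixpoint temporal_free (f : formula) : Prop :=
  match f with
  | FVar _ | FBot => True
  | FOr a b | FAnd a b | FImp a b => temporal_free a /\ temporal_free b
  | FNext _ | FUntil _ _ | FRelease _ _ => False
  end.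

Fixpoint THT1_XG (f : formula) : Prop :=
  match f with
  | FVar _ | FBot => True
  | FOr a b | FAnd a b | FImp a b => THT1_XG a /\ THT1_XG b
  | FNext a => temporal_free a
  | FUntil _ _ => False
  | FRelease a b => a = FBot /\ temporal_free b
  end.

Fixpoint subf (g f : formula) : Prop :=
  g = f \/
  match f with
  | FVar _ | FBot => False
  | FOr a b | FAnd a b | FImp a b | FUntil a b | FRelease a b => subf g a \/ subf g b
  | FNext a => subf g a
  end.

Definition witness_conditions (f : formula) (H T : word) (W : nat -> Prop) : Prop :=
  [/\ W 0,
      (exists g, subf (FNext g) f) -> W 1,
      H <> T -> exists i, H i \proper T i /\ W i,
      (forall a b, subf (FUntil a b) f ->
         (sat H T 0 (FUntil a b) ->
            forall i, sat H T i b -> (forall j, j < i -> ~ sat H T j b) -> W i) /\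
         (~ sat H T 0 (FUntil a b) -> sat H T 0 (FEv b) ->
            forall i, ~ sat H T i a -> (forall j, j < i -> sat H T j a) -> W i))
    & (forall a b, subf (FRelease a b) f ->
         (~ sat H T 0 (FRelease a b) ->
            forall i, ~ sat H T i b -> (forall j, j < i -> sat H T j b) -> W i) /\
         (sat H T 0 (FRelease a b) -> ~ sat H T 0 (FAlw b) ->
            forall i, sat H T i (FAnd a b) -> (forall j, j < i -> ~ sat H T j (FAnd a b)) -> W i))].

Definition witness_pattern (f : formula) (H T : word) (n : nat -> nat) : Prop :=
  (forall i, n i < n i.+1) /\
  exists k : nat,
    (forall i, k.+1 <= i -> H (n i) = H (n k.+1) /\ T (n i) = T (n k.+1)) /\
    let W := fun m => exists2 i, i <= k & n i = m in
    witness_conditions f H T W /\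
    (forall W' : nat -> Prop,
        (forall m, W' m -> W m) -> (exists m, W m /\ ~ W' m) ->
        ~ witness_conditions f H T W').

End THT.

(* Main.v *)
Require Import Defs.
From mathcomp Require Import all_boot.
From Stdlib Require Import Classical FunctionalExtensionality.

Section Aux.
Variable P : finType.

Lemma tf_local (g : formula P) : forall (H T H2 T2 : word P) i i2,
  temporal_free g -> H i = H2 i2 -> T i = T2 i2 ->
  (sat H T i g <-> sat H2 T2 i2 g).
Proof.
elim: g => [p| |a IHa b IHb|a IHa b IHb|a IHa b IHb|a IHa|a IHa b IHb|a IHa b IHb]
  H T H2 T2 i i2 //= tf EH ET.
- by rewrite EH.
- case: tf => ta tb; have := IHa H T H2 T2 i i2 ta EH ET;
  have := IHb H T H2 T2 i i2 tb EH ET; tauto.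
- case: tf => ta tb; have := IHa H T H2 T2 i i2 ta EH ET;
  have := IHb H T H2 T2 i i2 tb EH ET; tauto.
- case: tf => ta tb; have := IHa H T H2 T2 i i2 ta EH ET;
  have := IHb H T H2 T2 i i2 tb EH ET;
  have := IHa T T T2 T2 i i2 ta ET ET;
  have := IHb T T T2 T2 i i2 tb ET ET; tauto.
Qed.

Lemma tf_pers (g : formula P) : forall (H T : word P) i,
  temporal_free g -> H i \subset T i -> sat H T i g -> sat T T i g.
Proof.
elim: g => [p| |a IHa b IHb|a IHa b IHb|a IHa b IHb|a IHa|a IHa b IHb|a IHa b IHb]
  H T i //= tf sub.
- by move=> hp; apply: (subsetP sub).
- case: tf => ta tb [h|h]; [left; exact: IHa h|right; exact: IHb h].
- case: tf => ta tb [h1 h2]; split; [exact: IHa h1|exact: IHb h2].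
- by case=> _ h.
Qed.

Lemma sat_G (H T : word P) i b :
  sat H T i (FRelease (FBot P) b) <-> forall j, i <= j -> sat H T j b.
Proof.
rewrite /=; split => h j ij.
- by case: (h j ij) => // [[k [_ _ []]]].
- by left; apply: h.
Qed.

Lemma least_ex (Q : nat -> Prop) : (exists m, Q m) ->
  exists m, Q m /\ forall j, j < m -> ~ Q j.
Proof.
case=> m; elim: m {-2}m (leqnn m) => [|N IH] m lm Qm.
- exists m; split=> // j jm; move: lm jm; rewrite leqn0 => /eqP ->.
  by rewrite ltn0.
- case: (classic (exists j, j < m /\ Q j)) => [[j [jm Qj]]|nex].
  + apply: (IH j) => //; rewrite -ltnS; exact: leq_trans jm lm.
  + by exists m; split=> // j jm Qj; apply: nex; exists j.
Qed.

Lemma incr_lt (n : nat -> nat) : (forall i, n i < n i.+1) ->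
  forall i j, i < j -> n i < n j.
Proof.
move=> hn i j; elim: j => // j IH; rewrite ltnS leq_eqVlt => /orP [/eqP ->|ij].
- exact: hn.
- exact: ltn_trans (IH ij) (hn j).
Qed.

Lemma incr_inj (n : nat -> nat) : (forall i, n i < n i.+1) ->
  forall i j, n i = n j -> i = j.
Proof.
move=> hn i j e; case: (ltngtP i j) => // h.
- by have := @incr_lt n hn _ _ h; rewrite e ltnn.
- by have := @incr_lt n hn _ _ h; rewrite e ltnn.
Qed.

Lemma incr_ge (n : nat -> nat) : (forall i, n i < n i.+1) -> forall i, i <= n i.
Proof.
move=> hn; elim=> // i IH; exact: leq_ltn_trans IH (hn i).
Qed.

End Aux.

Theorem mainTheorem8 (P : finType) (f : formula P) (T : word P) (n : nat -> nat) :
  THT1_XG f -> equilibrium f T -> witness_pattern f T T n ->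
  equilibrium f (fun i => T (n i)).
Proof.
move=> hf [eqT eqmin] [hn [k [_ [[W0 W1 _ _ WR] _]]]].
set T' := fun i => T (n i).
have hn0 : n 0 = 0.
  move: W0 => /= [i _ ni]; have := @incr_ge n hn i; rewrite ni leqn0 => /eqP i0.
  by move: ni; rewrite i0.
have hn1 : (exists g, subf (FNext g) f) -> n 1 = 1.
  move=> /W1 /= [i _ ni]; have := @incr_ge n hn i; rewrite ni.
  case: i ni => [|[|i]] ni //; first by rewrite hn0 in ni.
have hG : forall b, subf (FRelease (FBot P) b) f ->
    (forall j, sat T T (n j) b) -> forall m, sat T T m b.
  move=> b sb hj m; apply: NNPP => nm.
  have [m0 [Hm0 Hlt]] := @least_ex (fun m => ~ sat T T m b) (ex_intro _ m nm).
  have [WRa _] := WR (FBot P) b sb.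
  have nrel : ~ sat T T 0 (FRelease (FBot P) b).
    by move/sat_G => h; apply: Hm0; apply: h.
  have := WRa nrel m0 Hm0 (fun j jl => NNPP _ (Hlt j jl)); move=> /= [i _ ni].
  by apply: Hm0; rewrite -ni; apply: hj.
have transfer : forall g, THT1_XG g -> (forall h, subf h g -> subf h f) ->
  forall H H' : word P,
    (forall j, H (n j) = H' j) ->
    (forall m, (forall j, n j <> m) -> H m = T m) ->
    (forall j, H' j \subset T' j) ->
    (sat H T 0 g <-> sat H' T' 0 g).
  elim=> [p| |a IHa b IHb|a IHa b IHb|a IHa b IHb|a IHa|a IHa b IHb|a IHa b IHb]
    hg hsub H H' R1 R2 R3 //=.
  - by have := R1 0; rewrite hn0 => ->.
  - case: hg => ga gb.
    have sa : forall h, subf h a -> subf h f by move=> h s; apply: hsub; right; left.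
    have sb' : forall h, subf h b -> subf h f by move=> h s; apply: hsub; right; right.
    have := IHa ga sa H H' R1 R2 R3; have := IHb gb sb' H H' R1 R2 R3; tauto.
  - case: hg => ga gb.
    have sa : forall h, subf h a -> subf h f by move=> h s; apply: hsub; right; left.
    have sb' : forall h, subf h b -> subf h f by move=> h s; apply: hsub; right; right.
    have := IHa ga sa H H' R1 R2 R3; have := IHb gb sb' H H' R1 R2 R3; tauto.
  - case: hg => ga gb.
    have sa : forall h, subf h a -> subf h f by move=> h s; apply: hsub; right; left.
    have sb' : forall h, subf h b -> subf h f by move=> h s; apply: hsub; right; right.
    have Q1 : forall j, T (n j) = T' j by [].
    have Q2 : forall m, (forall j, n j <> m) -> T m = T m by [].
    have Q3 : forall j, T' j \subset T' j by move=> j; apply/subsetP.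
    have := IHa ga sa H H' R1 R2 R3; have := IHb gb sb' H H' R1 R2 R3;
    have := IHa ga sa T T' Q1 Q2 Q3; have := IHb gb sb' T T' Q1 Q2 Q3; tauto.
  - have e1 : n 1 = 1 by apply: hn1; exists a; apply: hsub; left.
    apply: tf_local => //; first by rewrite -R1 e1.
    by rewrite /T' e1.
  - case: hg => ea tb; subst a.
    have sb : subf (FRelease (FBot P) b) f by apply: hsub; left.
    rewrite -/(sat H T 0 (FRelease (FBot P) b)) -/(sat H' T' 0 (FRelease (FBot P) b)).
    rewrite !sat_G; split=> h j _.
    + by apply/(@tf_local P b H T H' T' (n j) j tb (R1 j) (erefl _)); apply: h.
    + case: (classic (exists i, n i = j)) => [[i <-]|nex].
      * by apply/(@tf_local P b H T H' T' (n i) i tb (R1 i) (erefl _)); apply: h.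
      * have hT : forall m, sat T T m b.
          apply: (hG b sb) => i.
          have hi := h i (leq0n i); apply/(@tf_local P b T T T' T' (n i) i tb (erefl _) (erefl _)); exact (@tf_pers P b H' T' i tb (R3 i) hi).
        apply/(@tf_local P b H T T T j j tb (R2 j (fun i e => nex (ex_intro _ i e))) (erefl _)).
        exact: hT.
split.
- apply/(transfer f hf (fun h s => s) T T') => //.
- move=> H' sub neq sH'.
  pose H : word P := fun m =>
    match [pick j : 'I_m.+1 | n j == m] with Some j => H' j | None => T m end.
  have R1 : forall j, H (n j) = H' j.
    move=> j; rewrite /H; case: pickP => [j0 /eqP e|/(_ (Ordinal (@incr_ge n hn j : j < (n j).+1)))].
    + by rewrite (@incr_inj n hn _ _ e).
    + by rewrite /= eqxx.
  have R2 : forall m, (forall j, n j <> m) -> H m = T m.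
    by move=> m nm; rewrite /H; case: pickP => [j0 /eqP e|//]; case: (nm j0 e).
  apply: (eqmin H).
  + move=> m; case: (classic (exists j, n j = m)) => [[j <-]|nex].
    * by rewrite R1; apply: sub.
    * rewrite R2; first by apply/subsetP.
      by move=> j e; apply: nex; exists j.
  + move=> eHT; apply: neq; apply: functional_extensionality => j.
    by rewrite -R1 eHT.
  + by apply/(transfer f hf (fun h s => s) H H').
Qed.
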